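(* Let $V$ be a crossed module and $M$ an abelian $\pi_0(V)$-module. The map $z\mapsto(z_M,z_G)$ is an isomorphism of abelian groups from $Z^2(V,M)$ onto \[\{(c_1,z_0)\in \mathrm{Map}(M_V,M)\times Z^2(G_V,M):\ c_1(nm)=c_1(n)+c_1(m)-z_0(\mu(n),\mu(m)),\ c_1({}^gm)=\bar g\cdot c_1(m)+z_0(\mu({}^gm),g)-z_0(g,\mu(m))\ \forall m,n\in M_V,g\in G_V\}.\] Equivalently, $Z^2(V,M)$ together with $z\mapsto z_M$ and $z\mapsto z_G$ is the pullback of the homomorphisms $\mathrm{Map}(M_V,M)\to C^2(M_V,M)\times \mathrm{Map}(M_V\times G_V,M)$, $c_1\mapsto(dc_1,\alpha_1(c_1))$, and $Z^2(G_V,M)\to C^2(M_V,M)\times\mathrm{Map}(M_V\times G_V,M)$, $c_0\mapsto(c_0\circ(\mu\times\mu),\alpha_0(c_0))$, where $M$ is a trivial $M_V$-module, $\alpha_1(c_1)(m,g)=c_1({}^gm)-\bar g\cdot c_1(m)$ and $\alpha_0(c_0)(m,g)=c_0(\mu({}^gm),g)-c_0(g,\mu(m))$.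
   Context: Crossed module $V$: group $G_V$, group $M_V$ with left $G_V$-action ${}^gm$, homomorphism $\mu:M_V\to G_V$ with $\mu({}^gm)=g\mu(m)g^{-1}$, ${}^{\mu(n)}m=nmn^{-1}$; $\pi_0(V)=G_V/\mu(M_V)$, $\bar g$ the class of $g$. Cochains of $V$: $C^2(V,M)=\mathrm{Map}(M_V\times G_V\times G_V,M)$, and $d:C^2(V,M)\to C^3(V,M)=\mathrm{Map}(M_V\times M_V\times G_V\times M_V\times G_V\times G_V,M)$ is $(dc)(p,n,k,m,h,g)=c(p,\mu(n)k,\mu(m)h)-c(pn,k,hg)+c(n\,{}^km,kh,g)-\bar k\cdot c(m,h,g)$; $Z^2(V,M)=\ker d$. Module part $z_M(m):=z(m,1,1)$, group part $z_G(h,g):=z(1,h,g)$. Group cochains for a group $\Pi$ acting on $A$: $C^n(\Pi,A)=\mathrm{Map}(\Pi^n,A)$, $(dc)(h)$ on $C^1$: $(dc)(h,g)=c(h)-c(hg)+h\cdot c(g)$; on $C^2$: $(dc)(r,q,p)=c(r,q)-c(r,qp)+c(rq,p)-r\cdot c(q,p)$; $G_V$ acts on $M$ via $\pi_0(V)$. *)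

(* Defs.v *)
(* the coefficient module M is a zmodType; the groups G_V, M_V
   are arbitrary (possibly infinite) groups given as explicit records. *)
From HB Require Import structures.
From mathcomp Require Import all_boot all_algebra.
Set Implicit Arguments. Unset Strict Implicit. Unset Printing Implicit Defensive.
Import GRing.Theory.
Local Open Scope ring_scope.

Record group := Group {
  gcar :> Type;
  gmul : gcar -> gcar -> gcar;
  gone : gcar;
  ginv : gcar -> gcar;
  gmulA : forall x y z, gmul x (gmul y z) = gmul (gmul x y) z;
  gmul1x : forall x, gmul gone x = x;
  gmulx1 : forall x, gmul x gone = x;
  gmulVx : forall x, gmul (ginv x) x = gone;
  gmulxV : forall x, gmul x (ginv x) = gone
}.
Arguments gmul {g}. Arguments gone {g}. Arguments ginv {g}.

Record crossed_module := CrossedModule {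
  GV : group;
  MV : group;
  cact : GV -> MV -> MV;
  mu : MV -> GV;
  cact1 : forall m, cact gone m = m;
  cactM : forall g h m, cact (gmul g h) m = cact g (cact h m);
  cact_mul : forall g m n, cact g (gmul m n) = gmul (cact g m) (cact g n);
  mu_mul : forall m n, mu (gmul m n) = gmul (mu m) (mu n);
  mu_cact : forall g m, mu (cact g m) = gmul (gmul g (mu m)) (ginv g);
  peiffer : forall n m, cact (mu n) m = gmul (gmul n m) (ginv n)
}.

(* An abelian pi_0(V)-module, presented as a G_V-module on which mu(M_V)
   acts trivially (equivalently, a module over G_V / mu(M_V)). *)
Record pi0_module (V : crossed_module) (A : zmodType) := Pi0Module {
  mact : GV V -> A -> A;
  mactD : forall g a b, mact g (a + b) = mact g a + mact g b;
  mact1 : forall a, mact gone a = a;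
  mactM : forall g h a, mact (gmul g h) a = mact g (mact h a);
  mact_mu : forall m a, mact (mu m) a = a
}.

Section Cochains.
Variables (V : crossed_module) (A : zmodType) (Mod : pi0_module V A).
Local Notation G := (GV V).
Local Notation MM := (MV V).
Local Notation act := (mact Mod).

Definition C2V := MM -> G -> G -> A.

Definition dV (c : C2V) (p n : MM) (k : G) (m : MM) (h g : G) : A :=
  c p (gmul (mu n) k) (gmul (mu m) h) - c (gmul p n) k (gmul h g)
  + c (gmul n (cact k m)) (gmul k h) g - act k (c m h g).

Definition Z2V (z : C2V) : Prop :=
  forall p n k m h g, dV z p n k m h g = 0.

Definition addC2V (z z' : C2V) : C2V := fun m h g => z m h g + z' m h g.

Definition zM (z : C2V) : MM -> A := fun m => z m gone gone.
Definition zG (z : C2V) : G -> G -> A := fun h g => z gone h g.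

Definition dG2 (c : G -> G -> A) (r q p : G) : A :=
  c r q - c r (gmul q p) + c (gmul r q) p - act r (c q p).
Definition Z2G (c : G -> G -> A) : Prop := forall r q p, dG2 c r q p = 0.

Definition target_set (c1 : MM -> A) (z0 : G -> G -> A) : Prop :=
  Z2G z0 /\
  (forall n m : MM, c1 (gmul n m) = c1 n + c1 m - z0 (mu n) (mu m)) /\
  (forall (g : G) (m : MM),
      c1 (cact g m) = act g (c1 m) + z0 (mu (cact g m)) g - z0 g (mu m)).
End Cochains.

(* Main.v *)
Require Import Defs.
From mathcomp Require Import all_boot all_algebra.
From Stdlib Require Import FunctionalExtensionality.
Import GRing.Theory.
Local Open Scope ring_scope.

Inductive ex := Atom of nat | Add of ex & ex | Opp of ex | Zero.
Definition flip (p : nat * bool) := (p.1, ~~ p.2).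
Fixpoint norm (e : ex) : seq (nat * bool) :=
  match e with
  | Atom n => [:: (n, true)]
  | Add a b => norm a ++ norm b
  | Opp a => map flip (norm a)
  | Zero => [::]
  end.
Fixpoint remove (x : nat * bool) (l : seq (nat * bool)) :=
  match l with
  | [::] => None
  | y :: t => if y == x then Some t else omap (cons y) (remove x t)
  end.
Fixpoint canc (f : nat) (l : seq (nat * bool)) :=
  match f with
  | 0 => l
  | S f => match l with
           | [::] => [::]
           | y :: t => match remove (flip y) t with
                       | Some t' => canc f t'
                       | None => y :: canc f t
                       end
           end
  end.

Section ZS.
Variable A : zmodType.
Variable env : seq A.
Fixpoint evalx e : A :=
  match e with
  | Atom n => nth 0 env n
  | Add a b => evalx a + evalx b
  | Opp a => - evalx a
  | Zero => 0
  end.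
Definition evs (p : nat * bool) := if p.2 then nth 0 env p.1 else - nth 0 env p.1.
Definition evl l := foldr (fun p acc => evs p + acc) 0 l.
Lemma evl_cat l1 l2 : evl (l1 ++ l2) = evl l1 + evl l2.
Proof. by elim: l1 => [|x l IH] /=; rewrite ?add0r // IH addrA. Qed.
Lemma evs_flip p : evs (flip p) = - evs p.
Proof. by case: p => n [] /=; rewrite /evs /= ?opprK. Qed.
Lemma evl_flip l : evl (map flip l) = - evl l.
Proof. by elim: l => [|x l IH] /=; rewrite ?oppr0 // IH evs_flip opprD. Qed.
Lemma evl_norm e : evl (norm e) = evalx e.
Proof.
elim: e => [n|a IHa b IHb|a IHa|] /=; rewrite ?evl_cat ?evl_flip ?IHa ?IHb //.
by rewrite /evs /= addr0.
Qed.
Lemma remove_ev x l t : remove x l = Some t -> evl l = evs x + evl t.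
Proof.
elim: l t => [|y l IH] t //=.
case: eqP => [-> [<-] //|_].
case E: (remove x l) => [t'|] //= [<-] /=.
by rewrite (IH _ E) addrCA.
Qed.
Lemma canc_ev f l : evl (canc f l) = evl l.
Proof.
elim: f l => [|f IH] [|y t] //=.
case E: (remove (flip y) t) => [t'|]; last by rewrite /= IH.
by rewrite IH (remove_ev _ _ _ E) addrA evs_flip subrr add0r.
Qed.
Lemma zsolve_lemma e1 e2 :
  canc (size (norm e1 ++ map flip (norm e2))) (norm e1 ++ map flip (norm e2)) = [::] ->
  evalx e1 = evalx e2.
Proof.
move=> H; apply/eqP; rewrite -subr_eq0.
have := canc_ev (size (norm e1 ++ map flip (norm e2))) (norm e1 ++ map flip (norm e2)).
by rewrite H evl_cat evl_flip !evl_norm /= => <-.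
Qed.
End ZS.

Ltac len l := lazymatch l with
  | nil => constr:(0%nat)
  | _ :: ?t => let n := len t in constr:(S n) end.
Ltac idx_of x env := lazymatch env with
  | nil => constr:(@None nat)
  | x :: ?t => let n := len t in constr:(Some n)
  | _ :: ?t => idx_of x t end.
Ltac reify t env k :=
  lazymatch t with
  | @GRing.add _ ?a ?b =>
      reify a env ltac:(fun ea env1 =>
        reify b env1 ltac:(fun eb env2 => k constr:(Add ea eb) env2))
  | @GRing.opp _ ?a => reify a env ltac:(fun ea env1 => k constr:(Opp ea) env1)
  | @GRing.zero _ => k constr:(Zero) env
  | _ => let r := idx_of t env in
         lazymatch r with
         | Some ?n => k constr:(Atom n) env
         | None => let n := len env in k constr:(Atom n) constr:(t :: env)
         end
  end.
Ltac zsolve :=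
  lazymatch goal with |- ?l = ?r =>
    let T := type of l in
    reify l (@nil T) ltac:(fun el env1 =>
      reify r env1 ltac:(fun er env =>
        apply: (@zsolve_lemma _ (rev env) el er); vm_compute; reflexivity))
  end.

Lemma comb_sub (A : zmodType) (X Y : A) : Y = 0 -> X - Y = 0 -> X = 0.
Proof. by move=> -> ; rewrite subr0. Qed.
Lemma comb_add (A : zmodType) (X Y : A) : Y = 0 -> X + Y = 0 -> X = 0.
Proof. by move=> -> ; rewrite addr0. Qed.

Arguments comb_add {A X Y}.
Arguments comb_sub {A X Y}.

Section Main.
Variables (V : crossed_module) (A : zmodType) (Mod : pi0_module V A).
Local Notation act := (mact Mod).

Lemma idem1 (G : group) (x : G) : gmul x x = x -> x = gone.
Proof. by move=> e; rewrite -[x in LHS]gmul1x -(gmulVx x) -gmulA e. Qed.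
Lemma mu1 : mu (c:=V) gone = gone.
Proof. by apply: idem1; rewrite -mu_mul gmul1x. Qed.
Lemma cact1m (k : GV V) : cact k gone = gone.
Proof. by apply: idem1; rewrite -cact_mul gmul1x. Qed.
Lemma gmulVK (G : group) (x y : G) : gmul (gmul x (ginv y)) y = x.
Proof. by rewrite -gmulA gmulVx gmulx1. Qed.
Lemma mact0 g : act g 0 = 0.
Proof. by apply: (addrI (act g 0)); rewrite -mactD !addr0. Qed.
Lemma mactN g a : act g (- a) = - act g a.
Proof. by apply: (addrI (act g a)); rewrite -mactD !subrr mact0. Qed.

Ltac gsimp := rewrite ?mu1 ?cact1m ?gmul1x ?gmulx1 ?cact1 ?mact1.

Lemma zconst z : Z2V Mod z -> forall x y, z x gone y = zM z x.
Proof.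
move=> Hz x y; have := Hz x gone gone gone gone y; rewrite /dV /zM; gsimp.
move=> H; apply/eqP; rewrite -subr_eq0; apply/eqP. apply: (comb_add H); zsolve.
Qed.

Ltac lhs0 := apply/eqP; rewrite -subr_eq0; apply/eqP.

Lemma zF z : Z2V Mod z -> forall x k g, z x k g = zM z x - zG z (mu x) k + zG z k g.
Proof.
move=> Hz x k g; have := Hz gone x gone gone k g; rewrite /dV; gsimp.
rewrite zconst // /zM /zG => H; lhs0; apply: (comb_sub H); zsolve.
Qed.

Lemma Z2G_r1 c : Z2G Mod c -> forall r, c r gone = act r (c gone gone).
Proof.
move=> Hc r; have := Hc r gone gone; rewrite /dG2 !gmulx1 => H.
lhs0; apply: (comb_sub H); zsolve.
Qed.
Lemma Z2G_1p c : Z2G Mod c -> forall p, c gone p = c gone gone.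
Proof.
move=> Hc p; have := Hc gone gone p; rewrite /dG2 !gmul1x mact1 => H.
lhs0; apply: (comb_add H); zsolve.
Qed.

Lemma zG_cocycle z : Z2V Mod z -> Z2G Mod (zG z).
Proof.
move=> Hz r q p; have := Hz gone gone r gone q p; rewrite /dV /dG2 /zG; gsimp; done.
Qed.

Lemma into z : Z2V Mod z -> target_set Mod (zM z) (zG z).
Proof.
move=> Hz; have HG := zG_cocycle _ Hz; split; first exact: HG.
split.
- move=> n m; have := Hz n m gone gone gone gone; rewrite /dV; gsimp.
  rewrite (zF _ Hz n) (Z2G_r1 _ HG) mact_mu /zM /zG => H.
  lhs0; apply: (comb_add H); zsolve.
- move=> k m; have := Hz gone gone k m gone gone; rewrite /dV; gsimp.
  rewrite (zF _ Hz (cact k m)) /zM /zG => H.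
  lhs0; apply: (comb_sub H); zsolve.
Qed.

Lemma inj z z' : Z2V Mod z -> Z2V Mod z' -> zM z = zM z' -> zG z = zG z' -> z = z'.
Proof.
move=> Hz Hz' eM eG; apply: functional_extensionality => x.
apply: functional_extensionality => k; apply: functional_extensionality => g.
by rewrite (zF _ Hz) (zF _ Hz') eM eG.
Qed.

Lemma onto c1 z0 : target_set Mod c1 z0 ->
  exists z, Z2V Mod z /\ zM z = c1 /\ zG z = z0.
Proof.
case=> Hz0 [Hb Hc].
have c11 : c1 gone = z0 gone gone.
  have := Hb gone gone; rewrite gmul1x mu1 => H.
  have H' : c1 gone + c1 gone - z0 gone gone - c1 gone = 0 by rewrite -H subrr.
  lhs0; apply: (comb_sub H'); zsolve.
exists (fun m h g => c1 m - z0 (mu m) h + z0 h g); split; last split.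
- move=> p n k m h g; rewrite /dV (Hb p n) (Hb n (cact k m)) (Hc k m) !mactD !mactN.
  have C1 := Hz0 k h g.
  have C2 := Hz0 k (mu m) h.
  have C3 := Hz0 (mu p) (mu n) k.
  have C4 := Hz0 (mu n) (mu (cact k m)) k.
  have C5 := Hz0 (mu (gmul n (cact k m))) k h.
  have C6 := Hz0 (mu n) (gmul (mu (cact k m)) k) h.
  have C7 := Hz0 (mu n) k (gmul (mu m) h).
  move: C1 C2 C3 C4 C5 C6 C7; rewrite /dG2 ?mact_mu => C1 C2 C3 C4 C5 C6 C7.
  apply: (comb_sub C1); apply: (comb_add C2); apply: (comb_sub C3).
  apply: (comb_add C4); apply: (comb_sub C5); apply: (comb_add C6).
  apply: (comb_sub C7).
  rewrite !mu_mul !mu_cact !gmulA !gmulVK.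
  zsolve.
- apply: functional_extensionality => m; rewrite /zM (Z2G_r1 _ Hz0) mact_mu.
  by rewrite subrK.
- apply: functional_extensionality => h; apply: functional_extensionality => g.
  by rewrite /zG mu1 (Z2G_1p _ Hz0) c11 subrr add0r.
Qed.

End Main.

Theorem corollary3p12 (V : crossed_module) (A : zmodType) (Mod : pi0_module V A) :
  (* Z^2(V,M) is a subgroup, and z |-> (z_M, z_G) is additive *)
  (Z2V Mod (fun _ _ _ => 0)) /\
  (forall z z', Z2V Mod z -> Z2V Mod z' -> Z2V Mod (addC2V z z')) /\
  (forall z z' : C2V V A,
      zM (addC2V z z') = (fun m => zM z m + zM z' m) /\
      zG (addC2V z z') = (fun h g => zG z h g + zG z' h g)) /\
  (* it maps Z^2(V,M) into the target set *)
  (forall z, Z2V Mod z -> target_set Mod (zM z) (zG z)) /\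
  (* injective on Z^2(V,M) *)
  (forall z z', Z2V Mod z -> Z2V Mod z' -> zM z = zM z' -> zG z = zG z' -> z = z') /\
  (* onto the target set *)
  (forall c1 z0, target_set Mod c1 z0 ->
      exists z, Z2V Mod z /\ zM z = c1 /\ zG z = z0).
Proof.
split.
  by move=> p n k m h g; rewrite /dV mact0; zsolve.
split.
  move=> z z' Hz Hz' p n k m h g.
  have := Hz p n k m h g; have := Hz' p n k m h g.
  rewrite /dV /addC2V mactD => H1 H2.
  apply: (comb_sub H1); apply: (comb_sub H2); zsolve.
split; first by [].
split; first exact: into.
split; first exact: inj.
exact: onto.
Qed.
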